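(* Let $h>0$ and let $f:C([-h,0],\mathbb{R}_+)\to\mathbb{R}_+$ be a continuous functional which maps closed bounded sets into bounded subsets of $\mathbb{R}_+$. Consider $x'(t)=-x(t)+f(x_t)$, $x\ge0$, and assume that every nonnegative solution admits a unique extension to the whole right semi-axis. Suppose $f(0)=0$ and $f(K)=K$ for some $K>0$ (here $0$ and $K$ denote constant functions), and that the constant solution $x\equiv K$ attracts every solution with nonnegative, not identically zero initial function. Then there exists a positive solution $\psi:\mathbb{R}\to(0,\infty)$ of this equation defined for all $t\in\mathbb{R}$ such that $\psi(-\infty)=0$ and $\psi(+\infty)=K$.
   Context: $C([-h,0],\mathbb{R}_+)$ carries the sup norm $|\phi|=\max_{s\in[-h,0]}|\phi(s)|$, and $x_t\in C([-h,0],\mathbb{R}_+)$ is defined by $x_t(s)=x(t+s)$. *)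

(* Defs.v *)
From Stdlib Require Import Reals Lra.
From Coquelicot Require Import Coquelicot.
Open Scope R_scope.

(* Elements of C([-h,0],R_+) are modelled by functions R -> R, of which
   only the restriction to [-h,0] matters. *)

Definition cont_on (a b : R) (g : R -> R) : Prop :=
  forall s, a <= s <= b -> forall eps, 0 < eps ->
    exists delta, 0 < delta /\
      forall u, a <= u <= b -> Rabs (u - s) < delta -> Rabs (g u - g s) < eps.

Definition inC (h : R) (phi : R -> R) : Prop :=
  cont_on (- h) 0 phi /\ (forall s, - h <= s <= 0 -> 0 <= phi s).

Definition dist_le (h : R) (phi psi : R -> R) (d : R) : Prop :=
  forall s, - h <= s <= 0 -> Rabs (phi s - psi s) <= d.

Definition seg (x : R -> R) (t : R) : R -> R := fun s => x (t + s).

Definition cst (c : R) : R -> R := fun _ => c.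

Definition functional_continuous (h : R) (f : (R -> R) -> R) : Prop :=
  forall phi, inC h phi -> forall eps, 0 < eps ->
    exists delta, 0 < delta /\
      forall psi, inC h psi -> dist_le h phi psi delta ->
        Rabs (f psi - f phi) < eps.

(* f maps closed bounded sets of C into bounded sets; it suffices
   (and is equivalent) to ask it for the closed balls centered at 0 *)
Definition maps_bounded (h : R) (f : (R -> R) -> R) : Prop :=
  forall M, exists B, forall phi, inC h phi -> dist_le h phi (cst 0) M ->
    Rabs (f phi) <= B.

Definition is_solution (h : R) (f : (R -> R) -> R) (phi x : R -> R) : Prop :=
  (forall s, - h <= s <= 0 -> x s = phi s) /\
  (forall t, - h <= t -> 0 <= x t) /\
  (forall T, cont_on (- h) T x) /\
  (forall t, 0 < t -> is_derive x t (- x t + f (seg x t))).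

(* Main.v *)
Require Import Defs.
From Stdlib Require Import Reals Lra Lia Classical ClassicalEpsilon FunctionalExtensionality.
From Coquelicot Require Import Coquelicot.
Open Scope R_scope.

Definition LipOn (L a b : R) (g : R -> R) : Prop :=
  forall s t, a <= s <= b -> a <= t <= b -> Rabs (g s - g t) <= L * Rabs (s - t).

Definition Fof (f : (R -> R) -> R) (g : R -> R) : R -> R :=
  fun s => - g s + f (seg g s).

Definition Bnd (g F : R -> R) (a b : R) : Prop :=
  forall a' b' m M, a <= a' -> a' <= b' -> b' <= b ->
    (forall x, a' <= x <= b' -> m <= F x <= M) ->
    m * (b' - a') <= g b' - g a' <= M * (b' - a').

Lemma f_ext (h : R) (f : (R -> R) -> R) phi psi :
  functional_continuous h f -> inC h phi -> inC h psi ->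
  (forall s, - h <= s <= 0 -> phi s = psi s) -> f phi = f psi.
Proof.
  intros Hc Hp Hq He.
  destruct (Req_dec (f phi) (f psi)) as [E|E]; [exact E|exfalso].
  assert (Hpos : 0 < Rabs (f psi - f phi)).
  { apply Rabs_pos_lt. intro Z; apply E; lra. }
  destruct (Hc phi Hp _ Hpos) as [d [Hd H]].
  specialize (H psi Hq).
  assert (Hdl : dist_le h phi psi d).
  { intros s Hs. rewrite He by exact Hs. rewrite Rminus_eq_0, Rabs_R0; lra. }
  specialize (H Hdl). lra.
Qed.

Lemma Lip_cont L a b g : LipOn L a b g -> cont_on a b g.
Proof.
  intros HL s Hs eps Heps.
  exists (eps / (Rabs L + 1)). split.
  { apply Rdiv_lt_0_compat; [lra| pose proof (Rabs_pos L); lra]. }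
  intros u Hu Hus.
  eapply Rle_lt_trans. apply HL; assumption.
  pose proof (Rabs_pos L).
  apply Rle_lt_trans with (Rabs L * Rabs (u - s)).
  { apply Rmult_le_compat_r. apply Rabs_pos. apply Rle_abs. }
  apply Rle_lt_trans with (Rabs L * (eps / (Rabs L + 1))).
  { apply Rmult_le_compat_l; [lra|]. lra. }
  apply Rlt_le_trans with ((Rabs L + 1) * (eps / (Rabs L + 1))).
  { apply Rmult_lt_compat_r. apply Rdiv_lt_0_compat; lra. lra. }
  right. field. lra.
Qed.

Lemma LipOn_shift L a b c g : LipOn L a b g ->
  LipOn L (a - c) (b - c) (fun s => g (c + s)).
Proof.
  intros HL s t Hs Ht.
  replace (s - t) with ((c + s) - (c + t)) by ring.
  apply HL; lra.
Qed.

Lemma seg_inC h L g t : LipOn L (t - h) t g ->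
  (forall s, t - h <= s <= t -> 0 <= g s) -> inC h (seg g t).
Proof.
  intros HL Hn. split.
  - unfold seg. apply (Lip_cont L).
    replace (- h) with ((t - h) - t) by ring. replace 0 with (t - t) by ring.
    apply LipOn_shift. exact HL.
  - intros s Hs. unfold seg. apply Hn. lra.
Qed.

Lemma LipOn_sub L a b a' b' g : LipOn L a b g -> a <= a' -> b' <= b -> LipOn L a' b' g.
Proof. intros HL H1 H2 s t Hs Ht. apply HL; lra. Qed.

Lemma LipOn_glue L1 L2 a b c g : LipOn L1 a b g -> LipOn L2 b c g ->
  0 <= L1 -> 0 <= L2 ->
  LipOn (Rmax L1 L2) a c g.
Proof.
  intros H1 H2 P1 P2 s t Hs Ht.
  pose proof (Rmax_l L1 L2). pose proof (Rmax_r L1 L2).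
  assert (K1: forall u v, a <= u <= b -> a <= v <= b -> Rabs (g u - g v) <= Rmax L1 L2 * Rabs (u - v)).
  { intros u v Hu Hv. eapply Rle_trans. apply H1; auto. apply Rmult_le_compat_r; auto. apply Rabs_pos. }
  assert (K2: forall u v, b <= u <= c -> b <= v <= c -> Rabs (g u - g v) <= Rmax L1 L2 * Rabs (u - v)).
  { intros u v Hu Hv. eapply Rle_trans. apply H2; auto. apply Rmult_le_compat_r; auto. apply Rabs_pos. }
  destruct (Rle_dec s b); destruct (Rle_dec t b).
  - apply K1; lra.
  -
    replace (g s - g t) with ((g s - g b) + (g b - g t)) by ring.
    eapply Rle_trans. apply Rabs_triang.
    eapply Rle_trans. apply Rplus_le_compat. apply K1; lra. apply K2; lra.
    rewrite <- Rmult_plus_distr_l. apply Rmult_le_compat_l. lra.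
    rewrite (Rabs_left1 (s - b)) by lra. rewrite (Rabs_left1 (b - t)) by lra.
    rewrite (Rabs_left1 (s - t)) by lra. lra.
  - replace (g s - g t) with ((g s - g b) + (g b - g t)) by ring.
    eapply Rle_trans. apply Rabs_triang.
    eapply Rle_trans. apply Rplus_le_compat. apply K2; lra. apply K1; lra.
    rewrite <- Rmult_plus_distr_l. apply Rmult_le_compat_l. lra.
    rewrite (Rabs_right (s - b)) by lra. rewrite (Rabs_right (b - t)) by lra.
    rewrite (Rabs_right (s - t)) by lra. lra.
  - apply K2; lra.
Qed.
Lemma Bnd_ext g g' F F' a b : Bnd g F a b ->
  (forall t, a <= t <= b -> g t = g' t) -> (forall t, a <= t <= b -> F t = F' t) ->
  Bnd g' F' a b.
Proof.
  intros H Hg HF a' b' m M H1 H2 H3 Hb.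
  rewrite <- (Hg b') by lra. rewrite <- (Hg a') by lra.
  apply H; auto. intros x Hx. rewrite HF by lra. auto.
Qed.

Lemma Bnd_shift g F a b c : Bnd g F a b ->
  Bnd (fun t => g (t - c)) (fun t => F (t - c)) (a + c) (b + c).
Proof.
  intros H a' b' m M H1 H2 H3 Hb. simpl.
  replace (b' - a') with ((b' - c) - (a' - c)) by ring.
  apply H; try lra. intros x Hx. replace x with ((x + c) - c) by ring. apply Hb. lra.
Qed.

Lemma Bnd_glue g F a b c : Bnd g F a b -> Bnd g F b c -> Bnd g F a c.
Proof.
  intros H1 H2 a' b' m M Ha Hab Hb Hx.
  destruct (Rle_dec b' b).
  { apply H1; auto. }
  destruct (Rle_dec b a').
  { apply H2; auto; lra. }
  assert (A := H1 a' b m M Ha ltac:(lra) ltac:(lra) ltac:(intros; apply Hx; lra)).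
  assert (B := H2 b b' m M ltac:(lra) ltac:(lra) Hb ltac:(intros; apply Hx; lra)).
  replace (b' - a') with ((b - a') + (b' - b)) by ring.
  replace (g b' - g a') with ((g b - g a') + (g b' - g b)) by ring.
  split; rewrite Rmult_plus_distr_l; lra.
Qed.

Lemma Bnd_Lip g F a b L : Bnd g F a b -> (forall x, a <= x <= b -> Rabs (F x) <= L) ->
  LipOn L a b g.
Proof.
  intros H HF s t Hs Ht.
  assert (HB : forall x, a <= x <= b -> - L <= F x <= L).
  { intros x Hx. specialize (HF x Hx). apply Rabs_le_between in HF. lra. }
  destruct (Rle_dec s t).
  - assert (A := H s t (-L) L ltac:(lra) r ltac:(lra) ltac:(intros; apply HB; lra)).
    rewrite Rabs_minus_sym. rewrite (Rabs_minus_sym s t).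
    rewrite (Rabs_right (t - s)) by lra. apply Rabs_le_between. lra.
  - assert (A := H t s (-L) L ltac:(lra) ltac:(lra) ltac:(lra) ltac:(intros; apply HB; lra)).
    rewrite (Rabs_right (s - t)) by lra. apply Rabs_le_between. lra.
Qed.

Lemma cont_on_pt a b g s : cont_on a b g -> a < s < b -> continuity_pt g s.
Proof.
  intros Hc Hs. unfold continuity_pt, continue_in, limit1_in, limit_in.
  intros eps Heps. destruct (Hc s ltac:(lra) eps Heps) as [d [Hd Hu]].
  exists (Rmin d (Rmin (s - a) (b - s))). split.
  { apply Rmin_pos; auto. apply Rmin_pos; lra. }
  intros x [_ Hx]. simpl in Hx |- *. unfold R_dist in *.
  pose proof (Rmin_l d (Rmin (s - a) (b - s))).
  pose proof (Rmin_r d (Rmin (s - a) (b - s))).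
  pose proof (Rmin_l (s - a) (b - s)). pose proof (Rmin_r (s - a) (b - s)).
  apply Rabs_lt_between in Hx.
  apply Hu. lra. apply Rabs_lt_between. lra.
Qed.

Lemma SOLB h f phi x a b : 0 < h -> is_solution h f phi x -> 0 <= a -> Bnd x (Fof f x) a b.
Proof.
  intros Hh [Hi [Hn [Hc Hd]]] Ha a' b' m M H1 H2 H3 Hb.
  destruct (Req_dec a' b') as [E|E].
  { subst. rewrite !Rminus_eq_0, !Rmult_0_r. lra. }
  destruct (MVT_gen x a' b' (Fof f x)) as [c [Hc1 Hc2]].
  - intros y Hy. rewrite Rmin_left in Hy by lra. rewrite Rmax_right in Hy by lra.
    apply Hd. lra.
  - intros y Hy. rewrite Rmin_left in Hy by lra. rewrite Rmax_right in Hy by lra.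
    apply (cont_on_pt (- h) (b' + 1)). apply Hc. lra.
  - rewrite Rmin_left in Hc1 by lra. rewrite Rmax_right in Hc1 by lra.
    rewrite Hc2. specialize (Hb c Hc1).
    split; apply Rmult_le_compat_r; lra.
Qed.
Lemma seg_dist h L a b g s t : 0 < h -> LipOn L (a - h) b g -> a <= s <= b -> a <= t <= b ->
  dist_le h (seg g t) (seg g s) (Rabs L * Rabs (s - t)).
Proof.
  intros Hh HL Hs Ht u Hu. unfold seg.
  eapply Rle_trans. apply HL; lra.
  replace (t + u - (s + u)) with (- (s - t)) by ring. rewrite Rabs_Ropp.
  apply Rmult_le_compat_r. apply Rabs_pos. apply Rle_abs.
Qed.

Lemma Fof_cont h f L a b g t : 0 < h -> functional_continuous h f ->
  LipOn L (a - h) b g -> (forall s, a - h <= s <= b -> 0 <= g s) -> a <= t <= b ->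
  forall eps, 0 < eps -> exists d, 0 < d /\ forall s, a <= s <= b -> Rabs (s - t) < d ->
    Rabs (Fof f g s - Fof f g t) < eps.
Proof.
  intros Hh Hc HL Hn Ht eps Heps.
  assert (Ct : inC h (seg g t)).
  { apply (seg_inC h L). eapply LipOn_sub; [exact HL| lra | lra]. intros; apply Hn; lra. }
  destruct (Hc _ Ct (eps/2) ltac:(lra)) as [d1 [Hd1 H1]].
  pose proof (Rabs_pos L) as PL.
  exists (Rmin (d1 / (Rabs L + 1)) (eps / (2 * (Rabs L + 1)))). split.
  { apply Rmin_pos; apply Rdiv_lt_0_compat; lra. }
  intros s Hs Hst.
  pose proof (Rmin_l (d1 / (Rabs L + 1)) (eps / (2 * (Rabs L + 1)))).
  pose proof (Rmin_r (d1 / (Rabs L + 1)) (eps / (2 * (Rabs L + 1)))).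
  assert (Q : forall c, 0 < c -> Rabs (s - t) < c / (Rabs L + 1) -> Rabs L * Rabs (s - t) < c).
  { intros c Hc0 Hlt.
    apply Rle_lt_trans with ((Rabs L + 1) * Rabs (s - t)).
    { pose proof (Rabs_pos (s - t)). nra. }
    apply Rmult_lt_reg_l with (/ (Rabs L + 1)). apply Rinv_0_lt_compat; lra.
    rewrite <- Rmult_assoc, Rinv_l, Rmult_1_l by lra.
    rewrite Rmult_comm. exact Hlt. }
  assert (A1 : Rabs L * Rabs (s - t) < d1) by (apply Q; lra).
  assert (A2 : Rabs L * Rabs (s - t) < eps / 2).
  { apply Q. lra. replace (eps / 2 / (Rabs L + 1)) with (eps / (2 * (Rabs L + 1))) by (field; lra). lra. }
  assert (Cs : inC h (seg g s)).
  { apply (seg_inC h L). eapply LipOn_sub; [exact HL| lra | lra]. intros; apply Hn; lra. }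
  assert (B := H1 (seg g s) Cs).
  assert (D : dist_le h (seg g t) (seg g s) d1).
  { intros u Hu. eapply Rle_trans. apply (seg_dist h L a b g s t); auto. lra. }
  specialize (B D).
  assert (G : Rabs (g s - g t) < eps / 2).
  { eapply Rle_lt_trans. apply HL; lra.
    eapply Rle_lt_trans; [|exact A2]. apply Rmult_le_compat_r. apply Rabs_pos. apply Rle_abs. }
  unfold Fof.
  replace (- g s + f (seg g s) - (- g t + f (seg g t))) with (- (g s - g t) + (f (seg g s) - f (seg g t))) by ring.
  eapply Rle_lt_trans. apply Rabs_triang. rewrite Rabs_Ropp. lra.
Qed.

Lemma DER h f L a b g t : 0 < h -> functional_continuous h f ->
  LipOn L (a - h) b g -> (forall s, a - h <= s <= b -> 0 <= g s) ->
  Bnd g (Fof f g) a b -> a < t < b -> is_derive g t (Fof f g t).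
Proof.
  intros Hh Hc HL Hn HB Ht. apply is_derive_Reals.
  intros eps Heps.
  destruct (Fof_cont h f L a b g t Hh Hc HL Hn ltac:(lra) (eps/2) ltac:(lra)) as [d [Hd H]].
  assert (P : 0 < Rmin d (Rmin (t - a) (b - t))) by (apply Rmin_pos; [lra| apply Rmin_pos; lra]).
  exists (mkposreal _ P). intros h0 Hh0 Hlt. simpl in Hlt.
  pose proof (Rmin_l d (Rmin (t - a) (b - t))).
  pose proof (Rmin_r d (Rmin (t - a) (b - t))).
  pose proof (Rmin_l (t - a) (b - t)). pose proof (Rmin_r (t - a) (b - t)).
  apply Rabs_lt_between in Hlt.
  set (F := Fof f g t).
  assert (HF : forall x, Rmin t (t + h0) <= x <= Rmax t (t + h0) -> F - eps/2 <= Fof f g x <= F + eps/2).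
  { intros x Hx. unfold Rmin, Rmax in Hx. destruct (Rle_dec t (t + h0)).
    - assert (A := H x ltac:(lra) ltac:(apply Rabs_lt_between; lra)). apply Rabs_lt_between in A. unfold F; lra.
    - assert (A := H x ltac:(lra) ltac:(apply Rabs_lt_between; lra)). apply Rabs_lt_between in A. unfold F; lra. }
  apply Rabs_lt_between.
  destruct (Rlt_dec 0 h0).
  - assert (B := HB t (t + h0) (F - eps/2) (F + eps/2) ltac:(lra) ltac:(lra) ltac:(lra)
                  ltac:(intros x Hx; apply HF; rewrite Rmin_left, Rmax_right; lra)).
    replace (t + h0 - t) with h0 in B by ring.
    assert (Eq : (g (t + h0) - g t) / h0 * h0 = g (t + h0) - g t) by (field; lra).
    set (q := (g (t + h0) - g t) / h0) in *.
    split; apply Rmult_lt_reg_r with h0; auto; nra.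
  - assert (h0 < 0) by lra.
    assert (B := HB (t + h0) t (F - eps/2) (F + eps/2) ltac:(lra) ltac:(lra) ltac:(lra)
                  ltac:(intros x Hx; apply HF; rewrite Rmin_right, Rmax_left; lra)).
    replace (t - (t + h0)) with (- h0) in B by ring.
    replace ((g (t + h0) - g t) / h0) with ((g t - g (t + h0)) / (- h0)) by (field; lra).
    assert (Eq : (g t - g (t + h0)) / (- h0) * (- h0) = g t - g (t + h0)) by (field; lra).
    set (q := (g t - g (t + h0)) / (- h0)) in *.
    split; apply Rmult_lt_reg_r with (- h0); try lra; nra.
Qed.
Lemma BW2 (u : nat -> R) a b : (forall n, a <= u n <= b) ->
  exists c, a <= c <= b /\ forall r, 0 < r -> forall N, exists p, (N <= p)%nat /\ Rabs (u p - c) < r.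
Proof.
  intros Hu.
  destruct (Bolzano_Weierstrass u _ (compact_P3 a b) Hu) as [c Hc].
  assert (V : forall r, 0 < r -> forall N, exists p, (N <= p)%nat /\ Rabs (u p - c) < r).
  { intros r Hr N. apply (Hc (fun y => Rabs (y - c) < r)).
    exists (mkposreal r Hr). intros y Hy. exact Hy. }
  exists c. split; auto.
  split.
  - destruct (Rle_dec a c) as [|n]; auto. exfalso.
    destruct (V (a - c) ltac:(lra) 0%nat) as [p [_ Hp]].
    specialize (Hu p). apply Rabs_lt_between in Hp. lra.
  - destruct (Rle_dec c b) as [|n]; auto. exfalso.
    destruct (V (c - b) ltac:(lra) 0%nat) as [p [_ Hp]].
    specialize (Hu p). apply Rabs_lt_between in Hp. lra.
Qed.

Lemma small_inv d : 0 < d -> exists N : nat, forall n, (N <= n)%nat -> / (INR n + 1) < d.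
Proof.
  intros Hd. destruct (INR_unbounded (/ d)) as [N HN]. exists N. intros n Hn.
  apply le_INR in Hn. pose proof (pos_INR n).
  rewrite <- (Rinv_inv d). apply Rinv_lt_contravar.
  apply Rmult_lt_0_compat; [apply Rinv_0_lt_compat; lra| lra]. lra.
Qed.

Lemma UCC h f L a b g : 0 < h -> functional_continuous h f ->
  LipOn L (a - h) b g -> (forall s, a - h <= s <= b -> 0 <= g s) ->
  forall eps, 0 < eps -> exists d, 0 < d /\ forall s phi, a <= s <= b -> inC h phi ->
    dist_le h phi (seg g s) d -> Rabs (f phi - f (seg g s)) < eps.
Proof.
  intros Hh Hc HL Hn eps Heps.
  apply NNPP. intro Hno.
  assert (H : forall n : nat, exists s, a <= s <= b /\ exists phi, inC h phi /\
            dist_le h phi (seg g s) (/ (INR n + 1)) /\ eps <= Rabs (f phi - f (seg g s))).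
  { intro n. apply NNPP. intro Hn0. apply Hno. exists (/ (INR n + 1)). split.
    { apply Rinv_0_lt_compat. pose proof (pos_INR n). lra. }
    intros s phi Hs Hp Hd. apply Rnot_le_lt. intro Hle. apply Hn0. exists s. split; auto.
    exists phi. auto. }
  set (s := fun n => proj1_sig (constructive_indefinite_description _ (H n))).
  assert (Hs : forall n, a <= s n <= b /\ exists phi, inC h phi /\
            dist_le h phi (seg g (s n)) (/ (INR n + 1)) /\ eps <= Rabs (f phi - f (seg g (s n)))).
  { intro n. unfold s. destruct (constructive_indefinite_description _ (H n)). simpl. auto. }
  destruct (BW2 s a b ltac:(intro n; apply Hs)) as [c [Hcab Hc']].
  assert (Cc : inC h (seg g c)).
  { apply (seg_inC h L). eapply LipOn_sub; [exact HL|lra|lra]. intros; apply Hn; lra. }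
  destruct (Hc _ Cc (eps/2) ltac:(lra)) as [dc [Hdc Hcont]].
  pose proof (Rabs_pos L) as PL.
  destruct (small_inv (dc/2) ltac:(lra)) as [N HN].
  destruct (Hc' (dc / (2 * (Rabs L + 1))) ltac:(apply Rdiv_lt_0_compat; lra) N) as [p [Hp Hsp]].
  destruct (Hs p) as [Hsp0 [phi [Cphi [Dphi Ephi]]]].
  assert (Lr : Rabs L * Rabs (s p - c) <= dc / 2).
  { apply Rle_trans with ((Rabs L + 1) * (dc / (2 * (Rabs L + 1)))).
    - pose proof (Rabs_pos (s p - c)). nra.
    - right. field. lra. }
  assert (D1 : dist_le h (seg g c) (seg g (s p)) (dc / 2)).
  { intros u Hu. eapply Rle_trans. apply (seg_dist h L a b g (s p) c); auto. exact Lr. }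
  assert (Cs : inC h (seg g (s p))).
  { apply (seg_inC h L). eapply LipOn_sub; [exact HL|lra|lra]. intros; apply Hn; lra. }
  assert (A1 := Hcont _ Cs ltac:(intros u Hu; apply Rlt_le; eapply Rle_lt_trans; [apply D1; auto| lra])).
  assert (A2 : Rabs (f phi - f (seg g c)) < eps / 2).
  { apply Hcont; auto. intros u Hu.
    replace (seg g c u - phi u) with ((seg g c u - seg g (s p) u) + (- (phi u - seg g (s p) u))) by ring.
    eapply Rle_trans. apply Rabs_triang. rewrite Rabs_Ropp.
    specialize (D1 u Hu). specialize (Dphi u Hu). specialize (HN p Hp). lra. }
  replace (f phi - f (seg g (s p))) with ((f phi - f (seg g c)) - (f (seg g (s p)) - f (seg g c))) in Ephi by ring.
  pose proof (Rabs_triang (f phi - f (seg g c)) (- (f (seg g (s p)) - f (seg g c)))).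
  rewrite Rabs_Ropp in H0. unfold Rminus at 1 in Ephi. lra.
Qed.

Lemma LIM h f L a b (u : nat -> R -> R) g : 0 < h -> functional_continuous h f -> a <= b ->
  (forall k, LipOn L (a - h) b (u k)) -> (forall k s, a - h <= s <= b -> 0 <= u k s) ->
  LipOn L (a - h) b g -> (forall s, a - h <= s <= b -> 0 <= g s) ->
  (forall eps, 0 < eps -> exists N, forall k, (N <= k)%nat -> forall t, a - h <= t <= b ->
      Rabs (u k t - g t) <= eps) ->
  (forall N, exists k, (N <= k)%nat /\ Bnd (u k) (Fof f (u k)) a b) ->
  Bnd g (Fof f g) a b.
Proof.
  intros Hh Hc Hab HLu Hnu HLg Hng Conv Freq a' b' m M H1 H2 H3 Hb.
  set (D := b' - a').
  assert (KEY : forall eta, 0 < eta -> exists k,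
     (m - eta) * D <= u k b' - u k a' <= (M + eta) * D /\
     Rabs (u k b' - g b') <= eta /\ Rabs (u k a' - g a') <= eta).
  { intros eta Heta.
    destruct (UCC h f L a b g Hh Hc HLg Hng (eta/2) ltac:(lra)) as [d [Hd HU]].
    destruct (Conv (Rmin d (eta/2)) ltac:(apply Rmin_pos; lra)) as [N HN].
    destruct (Freq N) as [k [Hk HB]].
    pose proof (Rmin_l d (eta/2)). pose proof (Rmin_r d (eta/2)).
    exists k. split; [|split].
    - unfold D. apply HB; auto. intros x Hx. specialize (Hb x Hx).
      assert (E1 : Rabs (u k x - g x) <= eta / 2).
      { eapply Rle_trans. apply HN; auto. lra. lra. }
      assert (Cs : inC h (seg (u k) x)).
      { apply (seg_inC h L). eapply LipOn_sub; [apply HLu|lra|lra]. intros; apply Hnu; lra. }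
      assert (E2 : Rabs (f (seg (u k) x) - f (seg g x)) < eta / 2).
      { apply HU; auto. lra. intros v Hv. unfold seg. eapply Rle_trans. apply HN; auto. lra. lra. }
      unfold Fof in *. apply Rabs_le_between in E1. apply Rabs_lt_between in E2. lra.
    - eapply Rle_trans. apply HN; auto. lra. lra.
    - eapply Rle_trans. apply HN; auto. lra. lra. }
  assert (HD : 0 <= D) by (unfold D; lra).
  split.
  - apply Rle_plus_epsilon. intros e He.
    destruct (KEY (e / (D + 4)) ltac:(apply Rdiv_lt_0_compat; lra)) as [k [[K1 _] [K2 K3]]].
    apply Rabs_le_between in K2. apply Rabs_le_between in K3.
    assert (e / (D + 4) * D + 2 * (e / (D + 4)) <= e).
    { apply Rle_trans with (e / (D + 4) * (D + 4)). nra. right. field. lra. }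
    fold D. nra.
  - apply Rle_plus_epsilon. intros e He.
    destruct (KEY (e / (D + 4)) ltac:(apply Rdiv_lt_0_compat; lra)) as [k [[_ K1] [K2 K3]]].
    apply Rabs_le_between in K2. apply Rabs_le_between in K3.
    assert (e / (D + 4) * D + 2 * (e / (D + 4)) <= e).
    { apply Rle_trans with (e / (D + 4) * (D + 4)). assert (0 < e / (D+4)) by (apply Rdiv_lt_0_compat; lra). nra. right. field. lra. }
    fold D. nra.
Qed.
Definition incr (r : nat -> nat) := forall j, (r j < r (S j))%nat.

Lemma incr_lt r : incr r -> forall i j, (i < j)%nat -> (r i < r j)%nat.
Proof.
  intros Hr i j Hij. induction Hij.
  - apply Hr.
  - specialize (Hr m). lia.
Qed.

Lemma incr_le r : incr r -> forall i j, (i <= j)%nat -> (r i <= r j)%nat.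
Proof.
  intros Hr i j Hij. destruct (Nat.eq_dec i j). subst; lia.
  apply Nat.lt_le_incl. apply incr_lt; auto. lia.
Qed.

Lemma incr_id r : incr r -> forall i, (i <= r i)%nat.
Proof.
  intros Hr i. induction i. lia. specialize (Hr i). lia.
Qed.

Lemma incr_comp r1 r2 : incr r1 -> incr r2 -> incr (fun j => r1 (r2 j)).
Proof. intros H1 H2 j. apply incr_lt; auto. Qed.

Lemma E1 (v : nat -> R) C eta : (forall n, Rabs (v n) <= C) -> 0 < eta ->
  exists r, incr r /\ forall j k, Rabs (v (r j) - v (r k)) <= eta.
Proof.
  intros Hv Heta.
  destruct (BW2 v (- C) C ltac:(intro n; apply Rabs_le_between; auto)) as [c [_ Hc]].
  assert (Ex : forall N, exists p, (N <= p)%nat /\ Rabs (v p - c) < eta / 2).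
  { intro N. apply Hc. lra. }
  set (nx := fun N => proj1_sig (constructive_indefinite_description _ (Ex N))).
  assert (Hnx : forall N, (N <= nx N)%nat /\ Rabs (v (nx N) - c) < eta / 2).
  { intro N. unfold nx. destruct (constructive_indefinite_description _ (Ex N)). simpl. auto. }
  set (r := fix r j := match j with O => nx O | S j' => nx (S (r j')) end).
  exists r. split.
  - intro j. simpl. destruct (Hnx (S (r j))). lia.
  - assert (A : forall j, Rabs (v (r j) - c) < eta / 2).
    { intro j. destruct j; simpl; apply Hnx. }
    intros j k. specialize (A j) as A1. specialize (A k) as A2.
    apply Rabs_lt_between in A1. apply Rabs_lt_between in A2. apply Rabs_le_between. lra.
Qed.

Lemma E2 C eta a d (N : nat) : 0 < eta -> forall (w : nat -> R -> R), (forall k t, Rabs (w k t) <= C) ->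
  exists r, incr r /\ forall i, (i <= N)%nat -> forall j k,
    Rabs (w (r j) (a + INR i * d) - w (r k) (a + INR i * d)) <= eta.
Proof.
  intros Heta. induction N; intros w Hw.
  - destruct (E1 (fun n => w n (a + INR 0 * d)) C eta ltac:(intro; apply Hw) Heta) as [r [Hr H]].
    exists r. split; auto. intros i Hi j k. assert (i = 0%nat) by lia. subst. apply H.
  - destruct (IHN w Hw) as [r1 [Hr1 H1]].
    destruct (E1 (fun n => w (r1 n) (a + INR (S N) * d)) C eta ltac:(intro; apply Hw) Heta) as [r2 [Hr2 H2]].
    exists (fun j => r1 (r2 j)). split. apply incr_comp; auto.
    intros i Hi j k. destruct (Nat.eq_dec i (S N)).
    + subst. apply H2.
    + apply H1. lia.
Qed.

Lemma grid_near a d (N : nat) t : 0 < d -> a <= t <= a + INR N * d ->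
  exists i, (i <= N)%nat /\ Rabs (t - (a + INR i * d)) <= d.
Proof.
  intros Hd. induction N; intros Ht.
  - exists 0%nat. split. lia. simpl in *. replace (t - (a + 0 * d)) with 0 by (simpl in Ht; lra).
    rewrite Rabs_R0. lra.
  - destruct (Rle_dec t (a + INR N * d)).
    + destruct IHN as [i [Hi Hi']]. lra. exists i. split; auto.
    + exists (S N). split. lia. rewrite S_INR in *. apply Rabs_le_between. lra.
Qed.

Lemma E3 C L (w : nat -> R -> R) (m : R) e : 0 <= L -> 0 < e ->
  (forall k t, Rabs (w k t) <= C) -> (forall k s t, Rabs (w k s - w k t) <= L * Rabs (s - t)) ->
  exists r, incr r /\ forall j k t, Rabs t <= m -> Rabs (w (r j) t - w (r k) t) <= e.
Proof.
  intros HL He Hb Hl.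
  set (d := e / (3 * (L + 1))).
  assert (Hd : 0 < d) by (unfold d; apply Rdiv_lt_0_compat; lra).
  destruct (INR_unbounded (2 * Rabs m / d)) as [N HN].
  destruct (E2 C (e/3) (- Rabs m) d N ltac:(lra) w Hb) as [r [Hr H]].
  exists r. split; auto. intros j k t Ht.
  assert (Hgrid : - Rabs m <= t <= - Rabs m + INR N * d).
  { pose proof (Rle_abs m). apply Rabs_le_between in Ht. split. lra.
    assert (2 * Rabs m <= INR N * d).
    { assert (E : 2 * Rabs m / d * d = 2 * Rabs m) by (field; lra). nra. }
    lra. }
  destruct (grid_near (- Rabs m) d N t Hd Hgrid) as [i [Hi Hti]].
  set (p := - Rabs m + INR i * d) in *.
  specialize (H i Hi j k). fold p in H.
  assert (A1 := Hl (r j) t p). assert (A2 := Hl (r k) t p).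
  assert (Ld : L * d <= e / 3).
  { unfold d. apply Rle_trans with ((L + 1) * (e / (3 * (L + 1)))).
    apply Rmult_le_compat_r. apply Rlt_le. apply Rdiv_lt_0_compat; lra. lra.
    right. field. lra. }
  assert (B1 : L * Rabs (t - p) <= e / 3).
  { eapply Rle_trans; [|exact Ld]. apply Rmult_le_compat_l; auto. }
  apply Rabs_le_between in A1. apply Rabs_le_between in A2. apply Rabs_le_between in H.
  apply Rabs_le_between. lra.
Qed.
Lemma extract (u : nat -> R -> R) C L : 0 <= L ->
  (forall k t, Rabs (u k t) <= C) -> (forall k s t, Rabs (u k s - u k t) <= L * Rabs (s - t)) ->
  exists (sg : nat -> nat) (g : R -> R), incr sg /\
    forall m j, (m < j)%nat -> forall t, Rabs t <= INR m -> Rabs (u (sg j) t - g t) <= / (INR m + 1).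
Proof.
  intros HL Hb Hl.
  assert (HR : forall (S0 : nat -> nat) (m : nat), exists r, incr r /\
     forall j k t, Rabs t <= INR m -> Rabs (u (S0 (r j)) t - u (S0 (r k)) t) <= / (INR m + 1)).
  { intros S0 m. apply (E3 C L (fun n => u (S0 n)) (INR m)); auto.
    apply Rinv_0_lt_compat. pose proof (pos_INR m); lra. }
  set (R0 := fun S0 m => proj1_sig (constructive_indefinite_description _ (HR S0 m))).
  assert (HR0 : forall S0 m, incr (R0 S0 m) /\
     forall j k t, Rabs t <= INR m -> Rabs (u (S0 (R0 S0 m j)) t - u (S0 (R0 S0 m k)) t) <= / (INR m + 1)).
  { intros S0 m. unfold R0. destruct (constructive_indefinite_description _ (HR S0 m)). simpl. auto. }
  set (Sig := fix Sig (m : nat) : nat -> nat :=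
          match m with O => fun i => i | S m' => fun i => Sig m' (R0 (Sig m') m' i) end).
  assert (SigS : forall m i, Sig (S m) i = Sig m (R0 (Sig m) m i)) by reflexivity.
  assert (Sinc : forall m, incr (Sig m)).
  { induction m. intro j. simpl. lia. intro j. rewrite !SigS. apply incr_lt; auto. apply HR0. }
  assert (Sfac : forall m n, (S m <= n)%nat -> forall i, exists x, Sig n i = Sig (S m) x).
  { intros m n Hmn. induction Hmn. intros i; exists i; auto.
    intros i. rewrite SigS. apply IHHmn. }
  set (sg := fun j => Sig j j).
  assert (Hsg : incr sg).
  { intro j. unfold sg. rewrite SigS. apply incr_lt; auto.
    pose proof (incr_id _ (proj1 (HR0 (Sig j) j)) (S j)). lia. }
  assert (Pair : forall m j k t, (m < j)%nat -> (m < k)%nat -> Rabs t <= INR m ->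
     Rabs (u (sg j) t - u (sg k) t) <= / (INR m + 1)).
  { intros m j k t Hj Hk Ht. unfold sg.
    destruct (Sfac m j Hj j) as [x Hx]. destruct (Sfac m k Hk k) as [y Hy].
    rewrite Hx, Hy, !SigS. apply HR0; auto. }
  set (g := fun t => epsilon (inhabits 0) (fun l => is_lim_seq (fun j => u (sg j) t) l)).
  assert (Hg : forall t, is_lim_seq (fun j => u (sg j) t) (g t)).
  { intro t. unfold g. apply (epsilon_spec (inhabits 0) (fun l => is_lim_seq (fun j => u (sg j) t) l)).
    apply ex_lim_seq_cauchy_corr. intro eps.
    destruct (small_inv eps (cond_pos eps)) as [N1 HN1].
    destruct (INR_unbounded (Rabs t)) as [N2 HN2].
    exists (S (Nat.max N1 N2)). intros n k Hn Hk.
    eapply Rle_lt_trans. apply (Pair (Nat.max N1 N2)); try lia.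
    pose proof (le_INR _ _ (Nat.le_max_r N1 N2)). lra.
    apply HN1. lia. }
  exists sg, g. split; auto.
  intros m j Hmj t Ht.
  apply Rle_plus_epsilon. intros e He.
  specialize (Hg t). apply is_lim_seq_spec in Hg.
  destruct (Hg (mkposreal e He)) as [N HN]. simpl in HN.
  set (k := Nat.max N (S m)).
  specialize (HN k ltac:(unfold k; lia)).
  assert (P := Pair m j k t Hmj ltac:(unfold k; lia) Ht).
  replace (u (sg j) t - g t) with ((u (sg j) t - u (sg k) t) + (u (sg k) t - g t)) by ring.
  eapply Rle_trans. apply Rabs_triang. lra.
Qed.
Lemma conv_cor (u : nat -> R -> R) sg g :
  (forall m j, (m < j)%nat -> forall t, Rabs t <= INR m -> Rabs (u (sg j) t - g t) <= / (INR m + 1)) ->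
  forall T eps, 0 < eps -> exists N, forall j, (N <= j)%nat -> forall t, Rabs t <= T ->
     Rabs (u (sg j) t - g t) <= eps.
Proof.
  intros H T eps He.
  destruct (small_inv eps He) as [N1 HN1]. destruct (INR_unbounded T) as [N2 HN2].
  exists (S (Nat.max N1 N2)). intros j Hj t Ht.
  eapply Rle_trans. apply (H (Nat.max N1 N2)). lia.
  pose proof (le_INR _ _ (Nat.le_max_r N1 N2)). lra.
  left. apply HN1. lia.
Qed.

Lemma lim_pos_infty (x : R -> R) (K : R) : is_lim x p_infty K ->
  forall eps, 0 < eps -> exists M, forall y, M < y -> Rabs (x y - K) < eps.
Proof.
  intros H eps He. apply is_lim_spec in H. unfold is_lim' in H. destruct (H (mkposreal eps He)) as [M HM].
  exists M. exact HM.
Qed.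

Lemma hit h f e c K x : 0 < h -> 0 < e -> e < c -> c < K ->
  is_solution h f (cst e) x -> is_lim x p_infty K ->
  exists tau, 0 <= tau /\ (forall s, - h <= s <= tau -> x s <= c) /\ x tau = c.
Proof.
  intros Hh He Hec HcK Hs Hl.
  destruct Hs as [Hi [Hn [Hc Hd]]].
  destruct (lim_pos_infty x K Hl (K - c) ltac:(lra)) as [M HM].
  set (E := fun t => 0 <= t /\ forall s, 0 <= s <= t -> x s <= c).
  assert (x0 : x 0 = e) by (rewrite Hi; [reflexivity| lra]).
  assert (Hb : bound E).
  { exists M. intros t [Ht0 Ht]. destruct (Rle_dec t M) as [|n]; auto. exfalso.
    specialize (HM t ltac:(lra)). specialize (Ht t ltac:(lra)). apply Rabs_lt_between in HM. lra. }
  assert (Hne : exists t, E t).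
  { exists 0. split. lra. intros s Hs. replace s with 0 by lra. lra. }
  destruct (completeness E Hb Hne) as [tau [Hub Hlub]].
  assert (Ht0 : 0 <= tau) by (apply Hub; split; [lra| intros s Hs; replace s with 0 by lra; lra]).
  assert (Below : forall s, 0 <= s < tau -> x s <= c).
  { intros s Hs. apply NNPP. intro Hx.
    assert (s >= tau).
    { apply Rle_ge. apply Hlub. intros t [Ht1 Ht2]. destruct (Rle_dec t s) as [|n]; auto.
      exfalso. apply Hx. apply Ht2. lra. }
    lra. }
  assert (Cx := Hc (tau + 1) tau ltac:(lra)).
  assert (Le : x tau <= c).
  { apply NNPP. intro Hx.
    destruct (Cx (x tau - c) ltac:(lra)) as [d [Hd0 Hu]].
    destruct (Req_dec tau 0) as [Z|Z].
    { rewrite Z, x0 in Hx. lra. }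
    set (s := tau - Rmin d tau / 2).
    assert (Hs : 0 <= s < tau).
    { unfold s. pose proof (Rmin_l d tau). pose proof (Rmin_r d tau).
      assert (0 < Rmin d tau) by (apply Rmin_pos; lra). lra. }
    specialize (Below s Hs).
    assert (A := Hu s ltac:(lra) ltac:(unfold s; pose proof (Rmin_l d tau);
        assert (0 < Rmin d tau) by (apply Rmin_pos; lra);
        rewrite Rabs_left1 by lra; lra)).
    apply Rabs_lt_between in A. lra. }
  assert (Ge : c <= x tau).
  { apply NNPP. intro Hx.
    destruct (Cx (c - x tau) ltac:(lra)) as [d [Hd0 Hu]].
    set (d' := Rmin d 1 / 2).
    assert (Hd' : 0 < d' < d /\ d' < 1).
    { unfold d'. pose proof (Rmin_l d 1). pose proof (Rmin_r d 1).
      assert (0 < Rmin d 1) by (apply Rmin_pos; lra). lra. }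
    assert (E (tau + d')).
    { split. lra. intros s Hs. destruct (Rlt_dec s tau). apply Below; lra.
      assert (A := Hu s ltac:(lra) ltac:(rewrite Rabs_right by lra; lra)).
      apply Rabs_lt_between in A. lra. }
    specialize (Hub _ H). lra. }
  exists tau. split; auto. split.
  - intros s Hs. destruct (Rlt_dec s 0).
    + rewrite Hi by lra. unfold cst. lra.
    + destruct (Rlt_dec s tau). apply Below; lra. replace s with tau by lra. lra.
  - lra.
Qed.
Lemma cont_on_sub a b a' b' g : cont_on a b g -> a <= a' -> b' <= b -> cont_on a' b' g.
Proof.
  intros H H1 H2 s Hs eps He. destruct (H s ltac:(lra) eps He) as [d [Hd Hu]].
  exists d. split; auto. intros u Hu' Hus. apply Hu; auto. lra.
Qed.

Lemma cont_on_shift a b c g : cont_on a b g -> cont_on (a - c) (b - c) (fun s => g (c + s)).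
Proof.
  intros H s Hs eps He. destruct (H (c + s) ltac:(lra) eps He) as [d [Hd Hu]].
  exists d. split; auto. intros u Hu' Hus. apply Hu. lra.
  replace (c + u - (c + s)) with (u - s) by ring. auto.
Qed.

Lemma cont_on_ext a b g g' : cont_on a b g -> (forall t, a <= t <= b -> g t = g' t) -> cont_on a b g'.
Proof.
  intros H He s Hs eps Hp. destruct (H s Hs eps Hp) as [d [Hd Hu]].
  exists d. split; auto. intros u Hu' Hus. rewrite <- !He by auto. apply Hu; auto.
Qed.

Lemma inC_ext h phi psi : inC h phi -> (forall s, - h <= s <= 0 -> phi s = psi s) -> inC h psi.
Proof.
  intros [Hc Hn] He. split. eapply cont_on_ext; eauto.
  intros s Hs. rewrite <- He by auto. auto.
Qed.

Lemma LipOn_ext L a b g g' : LipOn L a b g -> (forall t, a <= t <= b -> g t = g' t) -> LipOn L a b g'.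
Proof. intros H He s t Hs Ht. rewrite <- !He by auto. auto. Qed.

Lemma sol_seg_inC h f phi x t : 0 < h -> is_solution h f phi x -> 0 <= t -> inC h (seg x t).
Proof.
  intros Hh [Hi [Hn [Hc Hd]]] Ht. split.
  - unfold seg. replace (- h) with ((t - h) - t) by ring. replace 0 with (t - t) by ring.
    apply cont_on_shift. eapply cont_on_sub. apply (Hc t). lra. lra.
  - intros s Hs. unfold seg. apply Hn. lra.
Qed.

Lemma bounded_cont a b x : a <= b -> cont_on a b x -> exists M, forall t, a <= t <= b -> Rabs (x t) <= M.
Proof.
  intros Hab Hc. apply NNPP. intro Hno.
  assert (H : forall n : nat, exists t, a <= t <= b /\ INR n < Rabs (x t)).
  { intro n. apply NNPP. intro Hn. apply Hno. exists (INR n). intros t Ht.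
    apply Rnot_lt_le. intro Hl. apply Hn. exists t. auto. }
  set (s := fun n => proj1_sig (constructive_indefinite_description _ (H n))).
  assert (Hs : forall n, a <= s n <= b /\ INR n < Rabs (x (s n))).
  { intro n. unfold s. destruct (constructive_indefinite_description _ (H n)). simpl. auto. }
  destruct (BW2 s a b ltac:(intro n; apply Hs)) as [c [Hcab Hc']].
  destruct (Hc c Hcab 1 ltac:(lra)) as [d [Hd Hu]].
  destruct (INR_unbounded (Rabs (x c) + 1)) as [N HN].
  destruct (Hc' d Hd N) as [p [Hp Hsp]].
  destruct (Hs p) as [Hsp0 Hsp1].
  specialize (Hu (s p) Hsp0 Hsp).
  pose proof (le_INR _ _ Hp).
  pose proof (Rabs_triang_inv (x (s p)) (x c)). lra.
Qed.

Lemma sol_lip h f phi x T : 0 < h -> maps_bounded h f -> is_solution h f phi x -> 0 <= T ->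
  exists L, 0 <= L /\ LipOn L 0 T x /\ (forall t, 0 <= t <= T -> Rabs (Fof f x t) <= L).
Proof.
  intros Hh Hmb Hs HT.
  destruct (bounded_cont (- h) T x ltac:(lra) (proj1 (proj2 (proj2 Hs)) T)) as [M HM].
  destruct (Hmb M) as [B HB].
  assert (Hb : forall t, 0 <= t <= T -> Rabs (Fof f x t) <= M + B).
  { intros t Ht. unfold Fof.
    assert (A : Rabs (f (seg x t)) <= B).
    { apply HB. apply (sol_seg_inC h f phi); auto. lra.
      intros u Hu. unfold seg, cst. rewrite Rminus_0_r. apply HM. lra. }
    eapply Rle_trans. apply Rabs_triang. rewrite Rabs_Ropp.
    pose proof (HM t ltac:(lra)). lra. }
  assert (0 <= M + B).
  { eapply Rle_trans. apply Rabs_pos. apply (Hb 0). lra. }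
  exists (M + B). split; auto. split; auto.
  apply (Bnd_Lip _ (Fof f x)); auto. apply (SOLB h f phi); auto. lra.
Qed.
Definition gl (g z : R -> R) (b : R) : R -> R :=
  fun t => if Rle_dec t b then g t else z (t - b).

Lemma GLUE h f L a b g z : 0 < h -> functional_continuous h f -> maps_bounded h f ->
  a <= b -> 0 <= L -> Bnd g (Fof f g) a b -> LipOn L (a - h) b g ->
  (forall s, a - h <= s <= b -> 0 <= g s) ->
  is_solution h f (seg g b) z ->
  let G := gl g z b in
    (forall t, t <= b -> G t = g t) /\
    (forall t, b - h <= t -> G t = z (t - b)) /\
    (forall t, a - h <= t -> 0 <= G t) /\
    (forall T, b <= T -> exists L', 0 <= L' /\ LipOn L' (a - h) T G) /\
    (forall T, b <= T -> Bnd G (Fof f G) a T) /\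
    (forall t, a < t -> is_derive G t (Fof f G t)).
Proof.
  intros Hh Hc Hmb Hab HL HB HLg Hng Hz G.
  assert (G1 : forall t, t <= b -> G t = g t).
  { intros t Ht. unfold G, gl. destruct (Rle_dec t b); [reflexivity| lra]. }
  assert (G2 : forall t, b - h <= t -> G t = z (t - b)).
  { intros t Ht. unfold G, gl. destruct (Rle_dec t b).
    - destruct Hz as [Hi _]. rewrite Hi by lra. unfold seg. f_equal. ring.
    - reflexivity. }
  assert (G3 : forall t, a - h <= t -> 0 <= G t).
  { intros t Ht. destruct (Rle_dec t b).
    - rewrite G1 by auto. apply Hng; lra.
    - rewrite G2 by lra. destruct Hz as [_ [Hn _]]. apply Hn. lra. }
  assert (F1 : forall t, a <= t <= b -> Fof f g t = Fof f G t).
  { intros t Ht. unfold Fof. rewrite G1 by lra. f_equal.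
    assert (Cg : inC h (seg g t)).
    { apply (seg_inC h L). eapply LipOn_sub; [exact HLg|lra|lra]. intros; apply Hng; lra. }
    apply (f_ext h); auto.
    - eapply inC_ext. exact Cg. intros s Hs. unfold seg. rewrite G1 by lra. reflexivity.
    - intros s Hs. unfold seg. rewrite G1 by lra. reflexivity. }
  assert (F2 : forall t, b <= t -> Fof f z (t - b) = Fof f G t).
  { intros t Ht. unfold Fof. rewrite G2 by lra. f_equal.
    assert (Cz : inC h (seg z (t - b))) by (apply (sol_seg_inC h f (seg g b)); auto; lra).
    apply (f_ext h); auto.
    - eapply inC_ext. exact Cz. intros s Hs. unfold seg. rewrite G2 by lra. f_equal. ring.
    - intros s Hs. unfold seg. rewrite G2 by lra. f_equal. ring. }
  assert (B1 : Bnd G (Fof f G) a b).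
  { eapply Bnd_ext. exact HB. intros t Ht. rewrite G1 by lra. reflexivity. exact F1. }
  assert (B2 : forall T, b <= T -> Bnd G (Fof f G) b T).
  { intros T HT.
    assert (A := Bnd_shift z (Fof f z) 0 (T - b) b (SOLB h f (seg g b) z 0 (T - b) Hh Hz ltac:(lra))).
    replace (0 + b) with b in A by ring. replace (T - b + b) with T in A by ring.
    eapply Bnd_ext. exact A. intros t Ht. simpl. rewrite G2 by lra. reflexivity.
    intros t Ht. simpl. apply F2. lra. }
  assert (B3 : forall T, b <= T -> Bnd G (Fof f G) a T).
  { intros T HT. eapply Bnd_glue. exact B1. apply B2; auto. }
  assert (L3 : forall T, b <= T -> exists L', 0 <= L' /\ LipOn L' (a - h) T G).
  { intros T HT.
    destruct (sol_lip h f (seg g b) z (T - b) Hh Hmb Hz ltac:(lra)) as [Lz [HLz [HLip HFz]]].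
    assert (Lb : LipOn Lz b T G).
    { apply (Bnd_Lip _ (Fof f G)). apply B2; auto.
      intros x Hx. rewrite <- F2 by lra. apply HFz. lra. }
    exists (Rmax L Lz). split. eapply Rle_trans; [exact HL| apply Rmax_l].
    apply LipOn_glue with b; auto.
    eapply LipOn_ext. exact HLg. intros t Ht. rewrite G1 by lra. reflexivity. }
  split; auto. split; auto. split; auto. split; auto. split; auto.
  intros t Ht.
  set (T := Rmax b t + 1).
  assert (HT : b <= T /\ t < T) by (unfold T; pose proof (Rmax_l b t); pose proof (Rmax_r b t); lra).
  destruct (L3 T ltac:(lra)) as [L' [_ HL']].
  apply (DER h f L' a T G t); auto.
  intros s Hs; apply G3; lra. apply B3; lra.
  lra.
Qed.
Definition clamp (lo hi t : R) : R := Rmax lo (Rmin t hi).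

Lemma clamp_in lo hi t : lo <= hi -> lo <= clamp lo hi t <= hi.
Proof.
  intros H. unfold clamp. split. apply Rmax_l.
  apply Rmax_lub; auto. apply Rmin_r.
Qed.

Lemma clamp_id lo hi t : lo <= t <= hi -> clamp lo hi t = t.
Proof.
  intros H. unfold clamp. rewrite Rmin_left by lra. rewrite Rmax_right by lra. reflexivity.
Qed.

Lemma clamp_lip lo hi s t : lo <= hi -> Rabs (clamp lo hi s - clamp lo hi t) <= Rabs (s - t).
Proof.
  intros H. pose proof (Rle_abs (s - t)). pose proof (Rle_abs (t - s)).
  rewrite (Rabs_minus_sym t s) in *.
  apply Rabs_le_between. unfold clamp, Rmax, Rmin.
  destruct (Rle_dec s hi); destruct (Rle_dec t hi);
  destruct (Rle_dec lo s); destruct (Rle_dec lo t);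
  destruct (Rle_dec lo hi); try destruct (Rle_dec lo hi); lra.
Qed.

Lemma clamp_LipOn L lo hi x : 0 <= L -> lo <= hi -> LipOn L lo hi x ->
  forall s t, Rabs (x (clamp lo hi s) - x (clamp lo hi t)) <= L * Rabs (s - t).
Proof.
  intros HL Hlh Hx s t. eapply Rle_trans. apply Hx; apply clamp_in; auto.
  apply Rmult_le_compat_l; auto. apply clamp_lip; auto.
Qed.

Lemma lim_props (u : nat -> R -> R) sg g L lo hi :
  (forall m j, (m < j)%nat -> forall t, Rabs t <= INR m -> Rabs (u (sg j) t - g t) <= / (INR m + 1)) ->
  (forall k s t, Rabs (u k s - u k t) <= L * Rabs (s - t)) ->
  (forall k t, lo <= u k t <= hi) ->
  (forall s t, Rabs (g s - g t) <= L * Rabs (s - t)) /\ (forall t, lo <= g t <= hi).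
Proof.
  intros H Hl Hb. split.
  - intros s t. apply Rle_plus_epsilon. intros e He.
    destruct (conv_cor u sg g H (Rmax (Rabs s) (Rabs t)) (e/2) ltac:(lra)) as [N HN].
    pose proof (Rmax_l (Rabs s) (Rabs t)). pose proof (Rmax_r (Rabs s) (Rabs t)).
    assert (A1 := HN N (le_n N) s ltac:(lra)). assert (A2 := HN N (le_n N) t ltac:(lra)).
    assert (A3 := Hl (sg N) s t).
    apply Rabs_le_between in A1. apply Rabs_le_between in A2. apply Rabs_le_between in A3.
    apply Rabs_le_between. lra.
  - intros t. destruct (Hb 0%nat t).
    split; apply Rle_plus_epsilon; intros e He;
    destruct (conv_cor u sg g H (Rabs t) e He) as [N HN];
    assert (A1 := HN N (le_n N) t (Rle_refl _)); apply Rabs_le_between in A1;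
    destruct (Hb (sg N) t); lra.
Qed.

Lemma Bnd_sub g F a b a' b' : Bnd g F a b -> a <= a' -> b' <= b -> Bnd g F a' b'.
Proof. intros H H1 H2 x y m M A1 A2 A3 Hx. apply H; auto; lra. Qed.

Lemma zero_sol h f phi : f (cst 0) = 0 -> (forall s, - h <= s <= 0 -> phi s = 0) ->
  is_solution h f phi (fun _ => 0).
Proof.
  intros Hf0 Hp. split; [|split; [|split]].
  - intros s Hs. rewrite Hp; auto.
  - intros; lra.
  - intros T s Hs eps He. exists 1. split. lra. intros. rewrite Rminus_eq_0, Rabs_R0. lra.
  - intros t Ht. replace (- 0 + f (seg (fun _ : R => 0) t)) with 0.
    apply is_derive_Reals. apply derivable_pt_lim_const. change (seg (fun _ : R => 0) t) with (cst 0). rewrite Hf0. ring.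
Qed.

Lemma shift_derive (psi : R -> R) t0 t l : is_derive psi (t0 + t) l ->
  is_derive (fun s => psi (t0 + s)) t l.
Proof.
  intros H. apply is_derive_Reals in H. apply is_derive_Reals.
  intros eps He. destruct (H eps He) as [d Hd]. exists d. intros h0 Hh0 Hlt.
  replace (t0 + (t + h0)) with (t0 + t + h0) by ring. apply Hd; auto.
Qed.

Lemma seg_shift (psi : R -> R) t0 t : seg (fun s => psi (t0 + s)) t = seg psi (t0 + t).
Proof.
  unfold seg. apply functional_extensionality. intro u. f_equal. ring.
Qed.
Lemma cst_inC h e : 0 <= e -> inC h (cst e).
Proof.
  intros He. split.
  - intros s Hs eps Hp. exists 1. split. lra. intros. unfold cst. rewrite Rminus_eq_0, Rabs_R0. lra.
  - intros. unfold cst. lra.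
Qed.

Lemma bundle h f (K : R) c B e : 0 < h -> functional_continuous h f ->
  (forall phi, inC h phi -> exists x, is_solution h f phi x) ->
  (forall phi x, inC h phi -> (exists s, - h <= s <= 0 /\ phi s <> 0) ->
     is_solution h f phi x -> is_lim x p_infty K) ->
  0 < c -> c < K -> 0 <= B ->
  (forall phi, inC h phi -> dist_le h phi (cst 0) c -> Rabs (f phi) <= B) ->
  0 < e < c ->
  exists x tau, is_solution h f (cst e) x /\ 0 <= tau /\
    (forall s, - h <= s <= tau -> 0 <= x s <= c) /\ x tau = c /\ LipOn (c + B) (- h) tau x.
Proof.
  intros Hh Hc Hex Hatt Hc0 HcK HB0 HB He.
  assert (Ce : inC h (cst e)) by (apply cst_inC; lra).
  destruct (Hex _ Ce) as [x Hx].
  assert (Hl : is_lim x p_infty K).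
  { apply (Hatt (cst e)); auto. exists 0. split. lra. unfold cst. lra. }
  destruct (hit h f e c K x Hh ltac:(lra) ltac:(lra) HcK Hx Hl) as [tau [Ht0 [Hle Hxt]]].
  assert (Hb : forall s, - h <= s <= tau -> 0 <= x s <= c).
  { intros s Hs. split. destruct Hx as [_ [Hn _]]. apply Hn. lra. apply Hle. auto. }
  exists x, tau. split; auto. split; auto. split; auto. split; auto.
  assert (L1 : LipOn 0 (- h) 0 x).
  { intros s t Hs Ht. destruct Hx as [Hi _]. rewrite !Hi by auto. unfold cst.
    rewrite Rminus_eq_0, Rabs_R0. lra. }
  assert (L2 : LipOn (c + B) 0 tau x).
  { apply (Bnd_Lip _ (Fof f x)). apply (SOLB h f (cst e)); auto. lra.
    intros t Ht. unfold Fof.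
    assert (A : Rabs (f (seg x t)) <= B).
    { apply HB. apply (sol_seg_inC h f (cst e)); auto. lra.
      intros u Hu. unfold seg, cst. rewrite Rminus_0_r. destruct (Hb (t + u)) as [P Q]. lra.
      rewrite Rabs_right; lra. }
    eapply Rle_trans. apply Rabs_triang. rewrite Rabs_Ropp.
    destruct (Hb t) as [P Q]. lra. rewrite Rabs_right by lra. lra. }
  assert (E : Rmax 0 (c + B) = c + B) by (apply Rmax_right; lra).
  rewrite <- E. apply LipOn_glue with 0; auto; lra.
Qed.
Lemma claimA h f (K : R) c B : 0 < h -> functional_continuous h f -> maps_bounded h f ->
  (forall phi, inC h phi -> exists x, is_solution h f phi x) ->
  (forall phi x y, inC h phi -> is_solution h f phi x -> is_solution h f phi y ->
     forall t, - h <= t -> x t = y t) ->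
  f (cst 0) = 0 ->
  (forall phi x, inC h phi -> (exists s, - h <= s <= 0 /\ phi s <> 0) ->
     is_solution h f phi x -> is_lim x p_infty K) ->
  0 < c -> c < K -> 0 <= B ->
  (forall phi, inC h phi -> dist_le h phi (cst 0) c -> Rabs (f phi) <= B) ->
  forall n : nat, exists e x tau, 0 < e < c /\ is_solution h f (cst e) x /\ 0 <= tau /\
    (forall s, - h <= s <= tau -> 0 <= x s <= c) /\ x tau = c /\ LipOn (c + B) (- h) tau x /\
    INR n <= tau.
Proof.
  intros Hh Hc Hmb Hex Huniq Hf0 Hatt Hc0 HcK HB0 HB n.
  apply NNPP. intro Hno.
  set (L0 := c + B).
  assert (HL0 : 0 < L0) by (unfold L0; lra).
  set (ee := fun k : nat => Rmin (c / 2) (/ (INR k + 1))).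
  assert (Hee : forall k, 0 < ee k < c /\ ee k <= / (INR k + 1)).
  { intro k. unfold ee. pose proof (Rmin_l (c/2) (/ (INR k + 1))).
    pose proof (Rmin_r (c/2) (/ (INR k + 1))).
    assert (0 < Rmin (c/2) (/ (INR k + 1))).
    { apply Rmin_pos. lra. apply Rinv_0_lt_compat. pose proof (pos_INR k). lra. }
    lra. }
  assert (Hb : forall k, exists p : (R -> R) * R, is_solution h f (cst (ee k)) (fst p) /\ 0 <= snd p /\
    (forall s, - h <= s <= snd p -> 0 <= fst p s <= c) /\ fst p (snd p) = c /\
    LipOn L0 (- h) (snd p) (fst p)).
  { intro k. destruct (bundle h f K c B (ee k) Hh Hc Hex Hatt Hc0 HcK HB0 HB (proj1 (Hee k)))
      as [x [tau H]]. exists (x, tau). exact H. }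
  set (XT := fun k => proj1_sig (constructive_indefinite_description _ (Hb k))).
  set (X := fun k => fst (XT k)). set (Tau := fun k => snd (XT k)).
  assert (HX : forall k, is_solution h f (cst (ee k)) (X k) /\ 0 <= Tau k /\
    (forall s, - h <= s <= Tau k -> 0 <= X k s <= c) /\ X k (Tau k) = c /\
    LipOn L0 (- h) (Tau k) (X k)).
  { intro k. unfold X, Tau, XT. destruct (constructive_indefinite_description _ (Hb k)). simpl. auto. }
  assert (HT : forall k, Tau k < INR n).
  { intro k. apply Rnot_le_lt. intro Hle. apply Hno. exists (ee k), (X k), (Tau k).
    destruct (HX k) as [A1 [A2 [A3 [A4 A5]]]]. split. apply Hee. auto 10. }
  set (u := fun k t => X k (clamp (- h) (Tau k) t)).
  assert (Hh' : forall k, - h <= Tau k) by (intro k; destruct (HX k) as [_ [A _]]; lra).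
  assert (Ub : forall k t, 0 <= u k t <= c).
  { intros k t. unfold u. apply (proj1 (proj2 (proj2 (HX k)))). apply clamp_in. auto. }
  assert (Ul : forall k s t, Rabs (u k s - u k t) <= L0 * Rabs (s - t)).
  { intros k s t. unfold u. apply clamp_LipOn. lra. auto. apply HX. }
  destruct (extract u c L0 ltac:(lra) ltac:(intros k t; destruct (Ub k t); rewrite Rabs_right; lra) Ul)
    as [sg [w [Hsg Hconv]]].
  destruct (lim_props u sg w L0 0 c Hconv Ul Ub) as [Wl Wb].
  assert (W0 : forall t, - h <= t <= 0 -> w t = 0).
  { intros t Ht. apply Rle_antisym; [|apply Wb].
    apply Rle_plus_epsilon. intros eps Heps.
    destruct (conv_cor u sg w Hconv h (eps/2) ltac:(lra)) as [N1 HN1].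
    destruct (small_inv (eps/2) ltac:(lra)) as [N2 HN2].
    set (j := Nat.max N1 N2).
    assert (A := HN1 j ltac:(unfold j; lia) t ltac:(apply Rabs_le_between; lra)).
    assert (E : u (sg j) t = ee (sg j)).
    { unfold u. rewrite clamp_id by (split; [lra| pose proof (proj1 (proj2 (HX (sg j)))); lra]).
      destruct (HX (sg j)) as [[Hi _] _]. rewrite Hi by auto. reflexivity. }
    rewrite E in A. destruct (Hee (sg j)) as [_ He2].
    assert (He3 := HN2 (sg j) ltac:(pose proof (incr_id sg Hsg j); unfold j in *; lia)).
    apply Rabs_le_between in A. lra. }
  destruct (BW2 (fun j => Tau (sg j)) 0 (INR n) ltac:(intro j; split; [apply HX| left; apply HT]))
    as [ts [Hts Hcl]].
  assert (Wts : w ts = c).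
  { apply Rle_antisym; [apply Wb|].
    apply Rle_plus_epsilon. intros eps Heps.
    set (eta := eps / (L0 + 2)).
    assert (Heta : 0 < eta) by (unfold eta; apply Rdiv_lt_0_compat; lra).
    destruct (conv_cor u sg w Hconv (INR n + h) eta Heta) as [N1 HN1].
    destruct (Hcl eta Heta N1) as [p [Hp Hp']]. simpl in Hp'.
    assert (A := HN1 p Hp ts ltac:(rewrite Rabs_right; lra)).
    assert (B1 := Ul (sg p) ts (Tau (sg p))).
    assert (E : u (sg p) (Tau (sg p)) = c).
    { unfold u. rewrite clamp_id by (split; [apply Hh'| lra]). apply HX. }
    rewrite E in B1. rewrite Rabs_minus_sym in Hp'.
    assert (L0 * Rabs (ts - Tau (sg p)) <= L0 * eta) by (apply Rmult_le_compat_l; lra).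
    assert ((L0 + 1) * eta <= eps).
    { unfold eta. apply Rle_trans with ((L0 + 2) * (eps / (L0 + 2))).
      apply Rmult_le_compat_r. apply Rlt_le; apply Rdiv_lt_0_compat; lra. lra. right. field. lra. }
    apply Rabs_le_between in A. apply Rabs_le_between in B1. destruct A as [A1 A2]. destruct B1 as [B2 B3].
    assert (S1 : c <= u (sg p) ts + L0 * eta) by lra.
    assert (S2 : L0 * eta + eta <= eps) by (rewrite Rmult_plus_distr_r, Rmult_1_l in H0; exact H0).
    lra. }
  assert (Hts0 : c <= L0 * ts).
  { assert (A := Wl ts 0). rewrite (W0 0) in A by lra. rewrite Wts, Rminus_0_r, Rminus_0_r in A.
    rewrite (Rabs_right c) in A by lra. rewrite (Rabs_right ts) in A by lra. exact A. }
  set (dl := c / (2 * L0)).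
  assert (Hdl : 0 < dl) by (unfold dl; apply Rdiv_lt_0_compat; lra).
  assert (Ldl : L0 * dl = c / 2) by (unfold dl; field; lra).
  set (b := ts - dl).
  assert (Hb0 : 0 < b).
  { unfold b. assert (L0 * (ts - dl) >= c / 2) by nra.
    apply Rmult_lt_reg_l with L0; auto. lra. }
  assert (Wb2 : c / 2 <= w b).
  { assert (A := Wl ts b). rewrite Wts in A. unfold b in A at 2.
    replace (ts - (ts - dl)) with dl in A by ring. rewrite (Rabs_right dl) in A by lra.
    apply Rabs_le_between in A. lra. }
  assert (BW : Bnd w (Fof f w) 0 b).
  { apply (LIM h f L0 0 b (fun j => u (sg j)) w); auto; try lra.
    - intros k s t _ _. apply Ul.
    - intros k s _. apply Ub.
    - intros s t _ _. apply Wl.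
    - intros s _. apply Wb.
    - intros eps Heps. destruct (conv_cor u sg w Hconv (b + h) eps Heps) as [N HN].
      exists N. intros k Hk t Ht. apply HN; auto. apply Rabs_le_between; lra.
    - intros N. destruct (Hcl dl Hdl N) as [p [Hp Hp']]. simpl in Hp'.
      exists p. split; auto.
      apply Rabs_lt_between in Hp'.
      destruct (HX (sg p)) as [Hs [_ [_ [_ _]]]].
      assert (Eq : forall t, - h <= t <= b -> u (sg p) t = X (sg p) t).
      { intros t Ht. unfold u. rewrite clamp_id; auto. unfold b in Ht. lra. }
      eapply Bnd_ext. apply (SOLB h f (cst (ee (sg p))) (X (sg p)) 0 b Hh Hs). lra.
      intros t Ht. symmetry. apply Eq. lra.
      intros t Ht. unfold Fof. rewrite Eq by lra. f_equal.
      assert (C1 : inC h (seg (X (sg p)) t)) by (apply (sol_seg_inC h f (cst (ee (sg p)))); auto; lra).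
      assert (C2 : inC h (seg (u (sg p)) t)).
      { eapply inC_ext. exact C1. intros s Hs'. unfold seg. symmetry. apply Eq. lra. }
      apply (f_ext h); auto.
      all: intros s Hs'; unfold seg; try symmetry; apply Eq; lra. }
  assert (Cb : inC h (seg w b)).
  { apply (seg_inC h L0). intros s t _ _. apply Wl. intros s _. apply Wb. }
  destruct (Hex _ Cb) as [z Hz].
  assert (LW : LipOn L0 (0 - h) b w) by (intros s t _ _; apply Wl).
  destruct (GLUE h f L0 0 b w z Hh Hc Hmb ltac:(lra) ltac:(lra) BW LW ltac:(intros; apply Wb) Hz)
    as [G1 [G2 [G3 [G4 [G5 G6]]]]].
  set (G := gl w z b) in *.
  assert (C0 : inC h (seg w 0)).
  { apply (seg_inC h L0). intros s t _ _. apply Wl. intros s _. apply Wb. }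
  assert (SG : is_solution h f (seg w 0) G).
  { split; [|split; [|split]].
    - intros s Hs. rewrite G1 by lra. unfold seg. f_equal. ring.
    - intros t Ht. apply G3. lra.
    - intros T. destruct (G4 (Rmax T b) (Rmax_r T b)) as [L' [_ HL']].
      eapply cont_on_sub. apply (Lip_cont L'). exact HL'. lra. apply Rmax_l.
    - intros t Ht. apply G6. lra. }
  assert (SZ : is_solution h f (seg w 0) (fun _ => 0)).
  { apply zero_sol; auto. intros s Hs. unfold seg. apply W0. lra. }
  assert (E := Huniq _ _ _ C0 SG SZ b ltac:(lra)).
  rewrite G1 in E by lra. lra.
Qed.
Lemma Bnd_trans h f x y tau a b : 0 < h -> functional_continuous h f -> a <= b ->
  Bnd x (Fof f x) (a + tau) (b + tau) ->
  (forall t, a - h <= t <= b -> y t = x (t + tau)) ->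
  (forall s, a + tau <= s <= b + tau -> inC h (seg x s)) ->
  Bnd y (Fof f y) a b.
Proof.
  intros Hh Hc Hab HB Hy HC.
  assert (A := Bnd_shift x (Fof f x) (a + tau) (b + tau) (- tau) HB).
  replace (a + tau + - tau) with a in A by ring. replace (b + tau + - tau) with b in A by ring.
  eapply Bnd_ext. exact A.
  - intros t Ht. simpl. rewrite Hy by lra. f_equal. ring.
  - intros t Ht. simpl. replace (t - - tau) with (t + tau) by ring. unfold Fof.
    rewrite Hy by lra. f_equal.
    assert (C1 := HC (t + tau) ltac:(lra)).
    assert (E : forall s, - h <= s <= 0 -> seg x (t + tau) s = seg y t s).
    { intros s Hs. unfold seg. rewrite Hy by lra. f_equal. ring. }
    apply (f_ext h); auto. eapply inC_ext; eauto.
Qed.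

Lemma min0_lip s t c : Rabs (Rmin (s + c) 0 - Rmin (t + c) 0) <= Rabs (s - t).
Proof.
  pose proof (Rle_abs (s - t)). pose proof (Rle_abs (t - s)).
  rewrite (Rabs_minus_sym t s) in *. apply Rabs_le_between.
  unfold Rmin. destruct (Rle_dec (s + c) 0); destruct (Rle_dec (t + c) 0); lra.
Qed.

Lemma exp_mono (f : (R -> R) -> R) psi s t0 :
  (forall t, is_derive psi t (Fof f psi t)) -> (forall t, 0 <= f (seg psi t)) -> s <= t0 ->
  exp s * psi s <= exp t0 * psi t0.
Proof.
  intros Hd Hf Hs.
  assert (D : forall t, derivable_pt_lim (fun u => exp u * psi u) t (exp t * f (seg psi t))).
  { intro t. replace (exp t * f (seg psi t)) with (exp t * psi t + exp t * Fof f psi t)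
      by (unfold Fof; ring).
    apply (derivable_pt_lim_mult exp psi). apply derivable_pt_lim_exp.
    apply is_derive_Reals. apply Hd. }
  destruct (MVT_gen (fun u => exp u * psi u) s t0 (fun t => exp t * f (seg psi t))) as [c [Hc1 Hc2]].
  - intros x _. apply is_derive_Reals. apply D.
  - intros x _. apply derivable_continuous_pt. exists (exp x * f (seg psi x)). apply D.
  - assert (0 <= exp c * f (seg psi c) * (t0 - s)).
    { apply Rmult_le_pos. apply Rmult_le_pos. left; apply exp_pos. apply Hf. lra. }
    lra.
Qed.
Theorem theorem5 (h : R) (f : (R -> R) -> R) (K : R) :
  0 < h ->
  (forall phi, inC h phi -> 0 <= f phi) ->
  functional_continuous h f ->
  maps_bounded h f ->
  (* every nonnegative initial function yields a unique global solution *)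
  (forall phi, inC h phi -> exists x, is_solution h f phi x) ->
  (forall phi x y, inC h phi -> is_solution h f phi x -> is_solution h f phi y ->
     forall t, - h <= t -> x t = y t) ->
  f (cst 0) = 0 ->
  0 < K ->
  f (cst K) = K ->
  (* x = K attracts every solution with nonzero nonnegative initial data *)
  (forall phi x, inC h phi -> (exists s, - h <= s <= 0 /\ phi s <> 0) ->
     is_solution h f phi x -> is_lim x p_infty K) ->
  exists psi : R -> R,
    (forall t, 0 < psi t) /\
    (forall t, is_derive psi t (- psi t + f (seg psi t))) /\
    is_lim psi m_infty 0 /\
    is_lim psi p_infty K.
Proof.
  intros Hh Hpos Hc Hmb Hex Huniq Hf0 HK HfK Hatt.
  set (c := K / 2).
  assert (Hc0 : 0 < c) by (unfold c; lra).
  assert (HcK : c < K) by (unfold c; lra).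
  destruct (Hmb c) as [B HB].
  assert (HB0 : 0 <= B).
  { eapply Rle_trans. apply Rabs_pos. apply (HB (cst 0)). apply cst_inC; lra.
    intros s _. unfold cst. rewrite Rminus_0_r, Rabs_R0. lra. }
  set (L0 := c + B).
  assert (HL0 : 0 < L0) by (unfold L0; lra).
  assert (CA := claimA h f K c B Hh Hc Hmb Hex Huniq Hf0 Hatt Hc0 HcK HB0 HB).
  assert (Hb : forall n : nat, exists p : (R -> R) * R, (exists e, 0 < e < c /\
    is_solution h f (cst e) (fst p)) /\ 0 <= snd p /\
    (forall s, - h <= s <= snd p -> 0 <= fst p s <= c) /\ fst p (snd p) = c /\
    LipOn L0 (- h) (snd p) (fst p) /\ INR n <= snd p).
  { intro n. destruct (CA n) as [e [x [tau [A1 [A2 [A3 [A4 [A5 [A6 A7]]]]]]]]].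
    exists (x, tau). simpl. split. exists e; auto. auto. }
  set (XT := fun k => proj1_sig (constructive_indefinite_description _ (Hb k))).
  set (X := fun k => fst (XT k)). set (Tau := fun k => snd (XT k)).
  assert (HX : forall k, (exists e, 0 < e < c /\ is_solution h f (cst e) (X k)) /\ 0 <= Tau k /\
    (forall s, - h <= s <= Tau k -> 0 <= X k s <= c) /\ X k (Tau k) = c /\
    LipOn L0 (- h) (Tau k) (X k) /\ INR k <= Tau k).
  { intro k. unfold X, Tau, XT. destruct (constructive_indefinite_description _ (Hb k)). simpl. auto. }
  clearbody XT X Tau.
  set (y := fun k t => X k (clamp (- h) (Tau k) (t + Tau k))).
  assert (Hh' : forall k, - h <= Tau k) by (intro k; destruct (HX k) as [_ [A _]]; lra).
  assert (Yb : forall k t, 0 <= y k t <= c).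
  { intros k t. unfold y. apply (proj1 (proj2 (proj2 (HX k)))). apply clamp_in. auto. }
  assert (Yl : forall k s t, Rabs (y k s - y k t) <= L0 * Rabs (s - t)).
  { intros k s t. unfold y. eapply Rle_trans. apply (clamp_LipOn L0); [lra|auto|apply HX].
    right. f_equal. f_equal. ring. }
  destruct (extract y c L0 ltac:(lra) ltac:(intros k t; destruct (Yb k t); rewrite Rabs_right; lra) Yl)
    as [sg [g [Hsg Hconv]]].
  destruct (lim_props y sg g L0 0 c Hconv Yl Yb) as [Gl Gb].
  assert (LG : forall L' a b, L0 <= L' -> LipOn L' a b g).
  { intros L' a b HL' s t _ _. eapply Rle_trans. apply Gl. apply Rmult_le_compat_r. apply Rabs_pos. auto. }
  assert (G0 : g 0 = c).
  { apply Rle_antisym; [apply Gb|].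
    apply Rle_plus_epsilon. intros eps Heps.
    destruct (conv_cor y sg g Hconv 0 eps Heps) as [N HN].
    assert (A := HN N (le_n N) 0 ltac:(rewrite Rabs_R0; lra)).
    assert (E : y (sg N) 0 = c).
    { unfold y. rewrite Rplus_0_l. rewrite clamp_id by (split; [apply Hh'| lra]). apply HX. }
    rewrite E in A. apply Rabs_le_between in A. lra. }
  assert (GB : forall a, a <= 0 -> Bnd g (Fof f g) a 0).
  { intros a Ha.
    apply (LIM h f L0 a 0 (fun j => y (sg j)) g); auto.
    - intros k s t _ _. apply Yl.
    - intros k s _. apply Yb.
    - intros s t _ _. apply Gl.
    - intros s _. apply Gb.
    - intros eps Heps. destruct (conv_cor y sg g Hconv (h - a) eps Heps) as [N HN].
      exists N. intros k Hk t Ht. apply HN; auto. apply Rabs_le_between; lra.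
    - intros N. destruct (INR_unbounded (h - a)) as [M HM].
      exists (Nat.max N M). split. lia.
      set (k := sg (Nat.max N M)).
      assert (Tk : h - a <= Tau k).
      { destruct (HX k) as [_ [_ [_ [_ [_ T]]]]].
        pose proof (incr_id sg Hsg (Nat.max N M)).
        assert (INR M <= INR k) by (apply le_INR; unfold k; lia). lra. }
      destruct (HX k) as [[e [He Hs]] [_ _]].
      apply (Bnd_trans h f (X k) (y k) (Tau k)); auto.
      + apply (SOLB h f (cst e)); auto. lra.
      + intros t Ht. unfold y. rewrite clamp_id. reflexivity. lra.
      + intros s Hs'. apply (sol_seg_inC h f (cst e)); auto. lra. }
  assert (C0 : inC h (seg g 0)).
  { apply (seg_inC h L0). apply LG; lra. intros s _. apply Gb. }
  destruct (Hex _ C0) as [z Hz].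
  set (psi := gl g z 0).
  assert (GL : forall a, a <= 0 ->
    (forall t, t <= 0 -> psi t = g t) /\
    (forall t, 0 - h <= t -> psi t = z (t - 0)) /\
    (forall t, a - h <= t -> 0 <= psi t) /\
    (forall T, 0 <= T -> exists L', 0 <= L' /\ LipOn L' (a - h) T psi) /\
    (forall T, 0 <= T -> Bnd psi (Fof f psi) a T) /\
    (forall t, a < t -> is_derive psi t (Fof f psi t))).
  { intros a Ha. apply (GLUE h f L0 a 0 g z); auto; try lra.
    apply LG; lra. intros s _; apply Gb. }
  assert (Pnn : forall t, 0 <= psi t).
  { intro t. destruct (GL (- Rabs t) ltac:(pose proof (Rabs_pos t); lra)) as [_ [_ [A _]]].
    apply A. pose proof (Rabs_pos t). pose proof (Rle_abs (- t)). rewrite Rabs_Ropp in *. lra. }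
  assert (Pd : forall t, is_derive psi t (Fof f psi t)).
  { intro t. destruct (GL (- Rabs t - 1) ltac:(pose proof (Rabs_pos t); lra)) as [_ [_ [_ [_ [_ A]]]]].
    apply A. pose proof (Rle_abs (- t)). rewrite Rabs_Ropp in *. lra. }
  assert (Pseg : forall t, inC h (seg psi t)).
  { intro t. destruct (GL (- Rabs t) ltac:(pose proof (Rabs_pos t); lra)) as [_ [_ [A [B4 _]]]].
    destruct (B4 (Rabs t) (Rabs_pos t)) as [L' [_ HL']].
    apply (seg_inC h L'). eapply LipOn_sub. exact HL'.
    pose proof (Rle_abs (- t)). rewrite Rabs_Ropp in *. lra. apply Rle_abs.
    intros s Hs. apply Pnn. }
  assert (Plip : forall a b, exists L', LipOn L' a b psi).
  { intros a b. destruct (GL (- Rabs a - h) ltac:(pose proof (Rabs_pos a); lra)) as [_ [_ [_ [B4 _]]]].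
    destruct (B4 (Rabs b) (Rabs_pos b)) as [L' [_ HL']]. exists L'.
    eapply LipOn_sub. exact HL'. pose proof (Rle_abs (- a)). rewrite Rabs_Ropp in *. lra. apply Rle_abs. }
  assert (Lp : is_lim psi p_infty K).
  { assert (Lz : is_lim z p_infty K).
    { apply (Hatt (seg g 0)); auto. exists 0. split. lra. unfold seg. rewrite Rplus_0_r, G0. lra. }
    apply (is_lim_ext_loc z). exists 0. intros t Ht.
    destruct (GL 0 (Rle_refl 0)) as [_ [A _]]. rewrite A by lra. f_equal. ring.
    exact Lz. }
  exists psi. split; [|split; [|split]].
  -
    intro t0. destruct (Pnn t0) as [|E]; auto. exfalso.
    assert (Z : forall s, s <= t0 -> psi s = 0).
    { intros s Hs. apply Rle_antisym; [|apply Pnn].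
      assert (A := exp_mono f psi s t0 Pd ltac:(intro t; apply Hpos; apply Pseg) Hs).
      rewrite <- E, Rmult_0_r in A. pose proof (exp_pos s).
      apply Rmult_le_reg_l with (exp s); auto. lra. }
    set (xs := fun s => psi (t0 + s)).
    assert (Sx : is_solution h f (seg psi t0) xs).
    { split; [|split; [|split]].
      - intros s Hs. reflexivity.
      - intros t Ht. apply Pnn.
      - intros T. destruct (Plip (t0 - h) (t0 + T)) as [L' HL'].
        apply (Lip_cont L'). unfold xs.
        replace (- h) with ((t0 - h) - t0) by ring. replace T with ((t0 + T) - t0) at 1 by ring.
        apply LipOn_shift. exact HL'.
      - intros t Ht. unfold xs. apply shift_derive.
        rewrite seg_shift. apply Pd. }
    assert (S0 : is_solution h f (seg psi t0) (fun _ => 0)).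
    { apply zero_sol; auto. intros s Hs. unfold seg. apply Z. lra. }
    destruct (lim_pos_infty psi K Lp (K/2) ltac:(lra)) as [M HM].
    set (yy := Rmax M t0 + 1).
    assert (A := Huniq _ _ _ (Pseg t0) Sx S0 (yy - t0) ltac:(unfold yy; pose proof (Rmax_r M t0); lra)).
    unfold xs in A. replace (t0 + (yy - t0)) with yy in A by ring.
    assert (B1 := HM yy ltac:(unfold yy; pose proof (Rmax_l M t0); lra)).
    rewrite A in B1. apply Rabs_lt_between in B1. lra.
  - intro t. apply Pd.
  -
    apply is_lim_spec. intros eps0.
    apply NNPP. intro Hno.
    assert (Htex : forall k : nat, exists t, t < - INR k /\ eps0 <= psi t).
    { intro k. apply NNPP. intro Hk. apply Hno. exists (- INR k). intros t Ht'.
      rewrite Rminus_0_r. rewrite Rabs_right by (apply Rle_ge; apply Pnn).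
      apply Rnot_le_lt. intro Hle. apply Hk. exists t. auto. }
    set (tk := fun k => proj1_sig (constructive_indefinite_description _ (Htex k))).
    assert (Htk : forall k, tk k < - INR k /\ eps0 <= psi (tk k)).
    { intro k. unfold tk. destruct (constructive_indefinite_description _ (Htex k)). simpl. auto. }
    clearbody tk.
    assert (Htk0 : forall k, tk k < 0).
    { intro k. pose proof (pos_INR k). destruct (Htk k). lra. }
    set (wk := fun k s => g (Rmin (s + tk k) 0)).
    assert (Wb : forall k t, 0 <= wk k t <= c) by (intros; unfold wk; apply Gb).
    assert (Wl : forall k s t, Rabs (wk k s - wk k t) <= L0 * Rabs (s - t)).
    { intros k s t. unfold wk. eapply Rle_trans. apply Gl. apply Rmult_le_compat_l. lra. apply min0_lip. }
    destruct (extract wk c L0 ltac:(lra) ltac:(intros k t; destruct (Wb k t); rewrite Rabs_right; lra) Wl)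
      as [sg2 [w [Hsg2 Hconv2]]].
    destruct (lim_props wk sg2 w L0 0 c Hconv2 Wl Wb) as [Wgl Wgb].
    assert (W0 : eps0 <= w 0).
    { apply Rle_plus_epsilon. intros e He.
      destruct (conv_cor wk sg2 w Hconv2 0 e He) as [N HN].
      assert (A := HN N (le_n N) 0 ltac:(rewrite Rabs_R0; lra)).
      assert (E : wk (sg2 N) 0 = psi (tk (sg2 N))).
      { unfold wk. rewrite Rplus_0_l. rewrite Rmin_left by (left; apply Htk0).
        destruct (GL 0 (Rle_refl 0)) as [A1 _]. rewrite A1. reflexivity. left; apply Htk0. }
      rewrite E in A. destruct (Htk (sg2 N)) as [_ P]. apply Rabs_le_between in A. lra. }
    assert (WB : forall a b, a <= b -> Bnd w (Fof f w) a b).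
    { intros a b Hab.
      apply (LIM h f L0 a b (fun j => wk (sg2 j)) w); auto.
      - intros k s t _ _. apply Wl.
      - intros k s _. apply Wb.
      - intros s t _ _. apply Wgl.
      - intros s _. apply Wgb.
      - intros eps Heps. destruct (conv_cor wk sg2 w Hconv2 (Rabs a + Rabs b + h) eps Heps) as [N HN].
        exists N. intros k Hk t Ht. apply HN; auto.
        pose proof (Rabs_pos a). pose proof (Rabs_pos b).
        pose proof (Rle_abs a). pose proof (Rle_abs (- a)). pose proof (Rle_abs b). pose proof (Rle_abs (- b)).
        rewrite Rabs_Ropp in *. apply Rabs_le_between; lra.
      - intros N. destruct (INR_unbounded (Rabs b)) as [M HM].
        exists (Nat.max N M). split. lia.
        set (k := sg2 (Nat.max N M)).
        assert (Tk : tk k + b < 0).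
        { destruct (Htk k) as [T _].
          pose proof (incr_id sg2 Hsg2 (Nat.max N M)).
          assert (INR M <= INR k) by (apply le_INR; unfold k; lia).
          pose proof (Rle_abs b). lra. }
        apply (Bnd_trans h f g (wk k) (tk k)); auto.
        + replace (b + tk k) with (tk k + b) by ring.
          apply (Bnd_sub g (Fof f g) (a + tk k) 0). apply GB. lra. lra. lra.
        + intros t Ht. unfold wk. rewrite Rmin_left by lra. reflexivity.
        + intros s Hs. apply (seg_inC h L0). apply LG; lra. intros u _; apply Gb. }
    assert (Cw : inC h (seg w 0)).
    { apply (seg_inC h L0). intros s t _ _; apply Wgl. intros s _; apply Wgb. }
    assert (Sw : is_solution h f (seg w 0) w).
    { split; [|split; [|split]].
      - intros s Hs. unfold seg. f_equal. ring.
      - intros t _. apply Wgb.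
      - intros T. apply (Lip_cont L0). intros s t _ _. apply Wgl.
      - intros t Ht. apply (DER h f L0 (t - 1) (t + 1) w t); auto.
        intros s u _ _; apply Wgl. intros s _; apply Wgb. apply WB; lra. lra. }
    assert (Lw : is_lim w p_infty K).
    { apply (Hatt (seg w 0)); auto. exists 0. split. lra. unfold seg. rewrite Rplus_0_r. pose proof (cond_pos eps0). lra. }
    destruct (lim_pos_infty w K Lw (K/2) ltac:(lra)) as [M HM].
    assert (A := HM (M + 1) ltac:(lra)). destruct (Wgb (M + 1)).
    apply Rabs_lt_between in A. unfold c in *. lra.
  - exact Lp.
Qed.
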